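(* In the setting (R), fix $x\in\mathbb{R}^n$. Then $v_{\lambda,\mu}+w_{\lambda,\mu}\to x$ as $\lambda,\mu\to0^+$; consequently $u_{\lambda,\mu}-v_{\lambda,\mu}\to0$, so that along any sequence $(\lambda_k,\mu_k)$ with $\lambda_k,\mu_k>0$ converging to $(0,0)$, the cluster points of $(v_{\lambda_k,\mu_k})_k$ and of $(u_{\lambda_k,\mu_k})_k$ coincide. Moreover, every such cluster point belongs to $U(x)$.
   Context: Setting (R): Let $F_1=\|\cdot\|$ and $F_2=|||\cdot|||$ be two norms on $\mathbb{R}^n$, with dual norms $\|\cdot\|_*$ and $|||\cdot|||_*$, so that $F_2^*(y)=I\{|||y|||_*\le1\}$ (indicator: $0$ if $|||y|||_*\le1$, $+\infty$ otherwise). For $x\in\mathbb{R}^n$ define $S(x)=\min_{u\in\mathbb{R}^n}F_1(u)+F_2^*(x-u)$ and $U(x)=\arg\min_{u\in\mathbb{R}^n}F_1(u)+F_2^*(x-u)$. For $\lambda,\mu>0$, problem (P) is $$\min_{v,w\in\mathbb{R}^n}\ F_1(v)+\frac{\lambda}{2}\|v\|_2^2+F_2^*(w)+\frac{1}{2\mu}\|x-v-w\|_2^2,$$ which has a unique minimizer denoted $(v_{\lambda,\mu},w_{\lambda,\mu})$; its minimal value is denoted $S_{\lambda,\mu}(x)$; set $u_{\lambda,\mu}=x-w_{\lambda,\mu}$. *)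

(* Defs.v *)
From mathcomp Require Import ssreflect ssrfun ssrbool eqtype ssrnat seq fintype bigop.
From Stdlib Require Import Reals.
Open Scope R_scope.

Definition vec (n : nat) := 'I_n -> R.

Definition vadd {n} (a b : vec n) : vec n := fun i => a i + b i.
Definition vsub {n} (a b : vec n) : vec n := fun i => a i - b i.
Definition vscale {n} (c : R) (a : vec n) : vec n := fun i => c * a i.
Definition vzero {n} : vec n := fun _ => 0.

Definition dot {n} (a b : vec n) : R := \big[Rplus/0]_(i < n) (a i * b i).
Definition norm2 {n} (a : vec n) : R := sqrt (dot a a).

Definition is_norm {n} (N : vec n -> R) : Prop :=
  (forall a, 0 <= N a) /\
  (forall a, N a = 0 -> a = vzero) /\
  (forall c a, N (vscale c a) = Rabs c * N a) /\
  (forall a b, N (vadd a b) <= N a + N b).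

Definition is_dual_norm {n} (N Nd : vec n -> R) : Prop :=
  forall y, is_lub (fun t => exists a, N a <= 1 /\ t = dot a y) (Nd y).

(* Objective of problem (P), with F2^* = indicator of the dual unit ball
   (F2^*(w) = 0 if Nd2 w <= 1, +oo otherwise), so (P) is the minimization
   over the feasible set { (v,w) : Nd2 w <= 1 } of the finite part below. *)
Definition P_obj {n} (F1 : vec n -> R) (lam mu : R) (x v w : vec n) : R :=
  F1 v + lam / 2 * (norm2 v) ^ 2 + 1 / (2 * mu) * (norm2 (vsub (vsub x v) w)) ^ 2.

Definition is_P_minimizer {n} (F1 Nd2 : vec n -> R) (lam mu : R) (x v w : vec n) : Prop :=
  Nd2 w <= 1 /\
  forall v' w', Nd2 w' <= 1 -> P_obj F1 lam mu x v w <= P_obj F1 lam mu x v' w'.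

(* u \in U(x) = argmin_u F1(u) + F2^*(x - u) *)
Definition in_U {n} (F1 Nd2 : vec n -> R) (x u : vec n) : Prop :=
  Nd2 (vsub x u) <= 1 /\
  forall u', Nd2 (vsub x u') <= 1 -> F1 u <= F1 u'.

Definition cluster_point {n} (a : nat -> vec n) (p : vec n) : Prop :=
  forall eps, 0 < eps -> forall N : nat, exists k : nat, (N <= k)%nat /\ norm2 (vsub (a k) p) < eps.

(* Main.v *)
Require Import Defs.
From HB Require Import structures.
From mathcomp Require Import ssreflect ssrfun ssrbool eqtype ssrnat seq fintype bigop.
From Stdlib Require Import Reals Lra Psatz FunctionalExtensionality Classical.
Open Scope R_scope.
Set Implicit Arguments.
HB.instance Definition _ := Monoid.isComLaw.Build R 0 Rplus (fun a b c => esym (Rplus_assoc a b c)) Rplus_comm Rplus_0_l.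

Lemma sumZ n (f : 'I_n -> R) c : \big[Rplus/0]_(i<n) (c * f i) = c * \big[Rplus/0]_(i<n) f i.
Proof. elim/big_rec2: _ => [|i y1 y2 _ ->]; ring. Qed.

Lemma sum_le n (f g : 'I_n -> R) : (forall i, f i <= g i) ->
  \big[Rplus/0]_(i<n) f i <= \big[Rplus/0]_(i<n) g i.
Proof. move=> H; elim/big_rec2: _ => [|i y1 y2 _ Hy]; [lra|]. have := H i; lra. Qed.

Lemma dot_ge0 n (a : vec n) : 0 <= dot a a.
Proof. rewrite /dot; apply: big_ind => //; [lra | move=> x y; lra | move=> i _; nra]. Qed.

Lemma norm2_ge0 n (a : vec n) : 0 <= norm2 a.
Proof. exact: sqrt_pos. Qed.

Lemma norm2_sq n (a : vec n) : norm2 a * norm2 a = dot a a.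
Proof. rewrite /norm2 sqrt_sqrt //; exact: dot_ge0. Qed.

Lemma dot_ext n (a b c d : vec n) : (forall i, a i * b i = c i * d i) -> dot a b = dot c d.
Proof. move=> H; rewrite /dot; apply: eq_bigr => i _; exact: H. Qed.

Lemma norm2_ext n (a b : vec n) : (forall i, a i * a i = b i * b i) -> norm2 a = norm2 b.
Proof. move=> H; rewrite /norm2 (@dot_ext _ a a b b H) //. Qed.

Lemma norm2_zero n (a : vec n) : (forall i, a i = 0) -> norm2 a = 0.
Proof. move=> H; rewrite /norm2 /dot big1 ?sqrt_0 // => i _; rewrite H; ring. Qed.

Lemma dot_quad n (a b : vec n) t :
  dot (fun i => a i + t * b i) (fun i => a i + t * b i)
  = dot a a + 2 * t * dot a b + t * t * dot b b.
Proof.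
rewrite /dot (eq_bigr (fun i => a i * a i + ((2 * t) * (a i * b i) + (t * t) * (b i * b i)))).
  by rewrite !big_split /= !sumZ Rplus_assoc.
move=> i _; ring.
Qed.

Lemma CS n (a b : vec n) : Rabs (dot a b) <= norm2 a * norm2 b.
Proof.
set A := dot a a; set B := dot a b; set C := dot b b.
have H : forall t, 0 <= A + 2 * t * B + t * t * C.
  move=> t; rewrite /A /B /C -dot_quad; exact: dot_ge0.
have HA : 0 <= A by exact: dot_ge0.
have HC : 0 <= C by exact: dot_ge0.
have HBB : B * B <= A * C.
  case: (Rle_lt_or_eq_dec 0 C HC) => [Cp|C0].
    have := H (- B / C).
    have -> : A + 2 * (- B / C) * B + - B / C * (- B / C) * C = (A * C - B * B) / C by field; lra.
    move=> H1.
    have : 0 <= (A * C - B * B) / C * C by apply: Rmult_le_pos; lra.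
    have -> : (A * C - B * B) / C * C = A * C - B * B by field; lra.
    lra.
  rewrite -C0.
  case: (Req_dec B 0) => [->|Bn]; first lra.
  have := H (- (A + 1) / (2 * B)).
  have -> : A + 2 * (- (A + 1) / (2 * B)) * B + - (A + 1) / (2 * B) * (- (A + 1) / (2 * B)) * C = - 1 by rewrite -C0; field.
  lra.
rewrite /norm2 -/A -/C -sqrt_mult_alt // -sqrt_Rsqr_abs.
apply: sqrt_le_1_alt; rewrite /Rsqr; lra.
Qed.

Lemma mink n (a b : vec n) : norm2 (vadd a b) <= norm2 a + norm2 b.
Proof.
have E : dot (vadd a b) (vadd a b) = dot a a + 2 * 1 * dot a b + 1 * 1 * dot b b.
  rewrite -dot_quad; apply: dot_ext => i; rewrite /vadd; ring.
have := CS a b; have := norm2_sq a; have := norm2_sq b.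
have := norm2_ge0 a; have := norm2_ge0 b => h1 h2 h3 h4 h5.
rewrite {1}/norm2 -(sqrt_square (norm2 a + norm2 b)); last lra.
apply: sqrt_le_1_alt; rewrite E.
have := Rle_abs (dot a b); nra.
Qed.

Lemma tri n (a b c : vec n) : norm2 (vsub a c) <= norm2 (vsub a b) + norm2 (vsub b c).
Proof.
rewrite (@norm2_ext _ (vsub a c) (vadd (vsub a b) (vsub b c))); first exact: mink.
move=> i; rewrite /vsub /vadd; ring.
Qed.

Lemma coord_le n (a : vec n) j : Rabs (a j) <= norm2 a.
Proof.
have H : a j * a j <= dot a a.
  rewrite /dot (bigD1 j) //=.
  have : 0 <= \big[Rplus/0]_(i < n | i != j) (a i * a i).
    apply: big_ind => //; [lra | move=> x y; lra | move=> i _; nra].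
  move=> ?; rewrite -{1}(Rplus_0_r (a j * a j)); exact: Rplus_le_compat_l.
rewrite -sqrt_Rsqr_abs /norm2; apply: sqrt_le_1_alt; rewrite /Rsqr; lra.
Qed.

Lemma norm_vzero n (N : vec n -> R) : is_norm N -> N vzero = 0.
Proof.
move=> [_ [_ [hs _]]].
have -> : (vzero : vec n) = vscale 0 vzero by apply: functional_extensionality => i; rewrite /vscale /vzero; ring.
rewrite hs Rabs_R0; ring.
Qed.

Lemma norm_bound n (N : vec n -> R) : is_norm N ->
  exists C, 0 <= C /\ forall a, N a <= C * norm2 a.
Proof.
move=> hN; have hN' := hN; move: hN' => [h0 [_ [hs ht]]].
pose e (i : 'I_n) : vec n := fun j => if i == j then 1 else 0.
exists (\big[Rplus/0]_(i<n) N (e i)); split.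
  apply: big_ind => [|x y|i _]; [lra | lra | exact: h0].
move=> a.
have Ea : a = \big[vadd/vzero]_(i<n) vscale (a i) (e i).
  apply: functional_extensionality => j.
  have -> : (\big[vadd/vzero]_(i<n) vscale (a i) (e i)) j = \big[Rplus/0]_(i<n) (a i * e i j).
    apply: (big_rec2 (fun (V : vec n) r => V j = r)) => // i y1 y2 _ <-; rewrite /vadd /vscale //.
  rewrite (bigD1 j) //= /e eqxx big1 => [|i /negbTE ->]; ring.
have H1 : N (\big[vadd/vzero]_(i<n) vscale (a i) (e i)) <= \big[Rplus/0]_(i<n) N (vscale (a i) (e i)).
  apply: (big_rec2 (fun (V : vec n) r => N V <= r)) => [|i y1 y2 _ Hy].
    rewrite norm_vzero //; lra.
  have := ht (vscale (a i) (e i)) y1; lra.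
rewrite {1}Ea; apply: (Rle_trans _ _ _ H1).
rewrite Rmult_comm -sumZ; apply: sum_le => i; rewrite hs.
have := coord_le a i; have := h0 (e i); nra.
Qed.

Lemma nd_ub n (N Nd : vec n -> R) y a : is_dual_norm N Nd -> N a <= 1 -> dot a y <= Nd y.
Proof. move=> h Ha; case: (h y) => ub _; apply: ub; by exists a. Qed.

Lemma nd_zero n (N Nd : vec n -> R) : is_dual_norm N Nd -> Nd vzero <= 1.
Proof.
move=> h; case: (h vzero) => _ lub.
have : Nd vzero <= 0.
  apply: lub => t [a [_ ->]]; rewrite /dot big1 => [|i _]; [lra | rewrite /vzero; ring].
lra.
Qed.

Lemma dot_sub n (a b c : vec n) : dot a (vsub b c) = dot a b - dot a c.
Proof.
have : dot a (vsub b c) + dot a c = dot a b.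
  rewrite /dot -big_split; apply: eq_bigr => i _; rewrite /vsub /=; ring.
lra.
Qed.

Lemma pos_coef mu : 0 < mu -> 0 < 1 / (2 * mu).
Proof. move=> h; apply: Rdiv_lt_0_compat; lra. Qed.

Lemma sq2 (z : R) : z ^ 2 = z * z.
Proof. ring. Qed.

Theorem lemma5p2 (n : nat) (F1 F2 Nd2 : vec n -> R)
  (hF1 : is_norm F1) (hF2 : is_norm F2) (hNd2 : is_dual_norm F2 Nd2)
  (x : vec n) (v w : R -> R -> vec n)
  (hvw : forall lam mu, 0 < lam -> 0 < mu ->
           is_P_minimizer F1 Nd2 lam mu x (v lam mu) (w lam mu)) :
  let u := fun lam mu => vsub x (w lam mu) in
  (forall eps, 0 < eps -> exists delta, 0 < delta /\
     forall lam mu, 0 < lam < delta -> 0 < mu < delta ->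
       norm2 (vsub (vadd (v lam mu) (w lam mu)) x) < eps) /\
  (forall eps, 0 < eps -> exists delta, 0 < delta /\
     forall lam mu, 0 < lam < delta -> 0 < mu < delta ->
       norm2 (vsub (u lam mu) (v lam mu)) < eps) /\
  (forall lamk muk : nat -> R,
     (forall k, 0 < lamk k /\ 0 < muk k) -> Un_cv lamk 0 -> Un_cv muk 0 ->
     (forall p, cluster_point (fun k => v (lamk k) (muk k)) p <->
                cluster_point (fun k => u (lamk k) (muk k)) p) /\
     (forall p, cluster_point (fun k => v (lamk k) (muk k)) p -> in_U F1 Nd2 x p)).
Proof.
move=> u.
have hF1' := hF1; move: hF1' => [hF1pos [_ [_ hF1t]]].
pose r lam mu := vsub (vsub x (v lam mu)) (w lam mu).
have Hcmp : forall lam mu, 0 < lam -> 0 < mu -> forall v' w', Nd2 w' <= 1 ->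
   F1 (v lam mu) + lam / 2 * norm2 (v lam mu) ^ 2 + 1 / (2 * mu) * norm2 (r lam mu) ^ 2
   <= P_obj F1 lam mu x v' w'.
  move=> lam mu hl hm v' w' hw; have [_ H] := hvw lam mu hl hm; exact: H.
have Hfeas : forall lam mu, 0 < lam -> 0 < mu -> Nd2 (w lam mu) <= 1.
  by move=> lam mu hl hm; have [H _] := hvw lam mu hl hm.
have Hu' : forall lam mu u', 0 < lam -> 0 < mu -> Nd2 (vsub x u') <= 1 ->
    F1 (v lam mu) <= F1 u' + lam / 2 * norm2 u' ^ 2.
  move=> lam mu u' hl hm hf.
  have := Hcmp lam mu hl hm u' (vsub x u') hf.
  rewrite /P_obj (@norm2_zero _ (vsub (vsub x u') (vsub x u'))); last first.
    by move=> i; rewrite /vsub; ring.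
  have h1 : 0 <= lam / 2 * norm2 (v lam mu) ^ 2.
    apply: Rmult_le_pos; [lra | apply: pow2_ge_0].
  have h2 : 0 <= 1 / (2 * mu) * norm2 (r lam mu) ^ 2.
    apply: Rmult_le_pos; [apply: Rlt_le; exact: pos_coef | apply: pow2_ge_0].
  have -> : 1 / (2 * mu) * 0 ^ 2 = 0 by ring.
  lra.
set K := 2 * F1 x + norm2 x * norm2 x.
have HK : 0 <= K.
  have := hF1pos x; have := norm2_ge0 x; rewrite /K; nra.
have Hr : forall lam mu, 0 < lam <= 1 -> 0 < mu ->
    norm2 (r lam mu) * norm2 (r lam mu) <= mu * K.
  move=> lam mu hl hm.
  have := Hcmp lam mu (proj1 hl) hm x vzero (nd_zero hNd2).
  rewrite /P_obj (@norm2_zero _ (vsub (vsub x x) vzero)); last first.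
    by move=> i; rewrite /vsub /vzero; ring.
  rewrite !sq2.
  set R2 := norm2 (r lam mu) * norm2 (r lam mu).
  set s := 1 / (2 * mu).
  have hs : s * (2 * mu) = 1 by rewrite /s; field; lra.
  have h1 : 0 <= lam / 2 * (norm2 (v lam mu) * norm2 (v lam mu)).
    apply: Rmult_le_pos; [lra | apply: Rle_0_sqr].
  have hx : 0 <= norm2 x * norm2 x by apply: Rle_0_sqr.
  have := hF1pos (v lam mu).
  move=> hv hc.
  have hsR : s * R2 <= F1 x + norm2 x * norm2 x / 2.
    have : lam / 2 * (norm2 x * norm2 x) <= norm2 x * norm2 x / 2 by nra.
    lra.
  have : 2 * mu * (s * R2) <= 2 * mu * (F1 x + norm2 x * norm2 x / 2).
    apply: Rmult_le_compat_l; lra.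
  have -> : 2 * mu * (s * R2) = R2 by transitivity (s * (2 * mu) * R2); [ring | rewrite hs; ring].
  rewrite /K; lra.
have Hconv : forall eps, 0 < eps -> exists delta, 0 < delta /\
     forall lam mu, 0 < lam < delta -> 0 < mu < delta -> norm2 (r lam mu) < eps.
  move=> eps he; exists (Rmin 1 (eps * eps / (K + 1))); split.
    apply: Rmin_glb_lt; [lra | apply: Rdiv_lt_0_compat; nra].
  move=> lam mu hl hm.
  have d1 := Rmin_l 1 (eps * eps / (K + 1)).
  have d2 := Rmin_r 1 (eps * eps / (K + 1)).
  have hl1 : 0 < lam <= 1 by split; [exact: (proj1 hl) | lra].
  have H := Hr lam mu hl1 (proj1 hm).
  have hm' : mu < eps * eps / (K + 1) by lra.
  have : mu * (K + 1) < eps * eps / (K + 1) * (K + 1).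
    apply: Rmult_lt_compat_r; lra.
  have -> : eps * eps / (K + 1) * (K + 1) = eps * eps by field; lra.
  have := norm2_ge0 (r lam mu).
  move=> h0 h1; nra.
split.
  move=> eps he; case: (Hconv eps he) => d [hd H]; exists d; split => // lam mu hl hm.
  rewrite (@norm2_ext _ _ (r lam mu)); first exact: H.
  by move=> i; rewrite /r /vsub /vadd; ring.
have Hconv2 : forall eps, 0 < eps -> exists delta, 0 < delta /\
     forall lam mu, 0 < lam < delta -> 0 < mu < delta ->
       norm2 (vsub (u lam mu) (v lam mu)) < eps.
  move=> eps he; case: (Hconv eps he) => d [hd H]; exists d; split => // lam mu hl hm.
  rewrite (@norm2_ext _ _ (r lam mu)); first exact: H.
  by move=> i; rewrite /u /r /vsub; ring.
split; first exact: Hconv2.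
move=> lamk muk hpos cvl cvm.
have Hsmall : forall d, 0 < d -> exists N, forall k, (N <= k)%nat -> lamk k < d /\ muk k < d.
  move=> d hd; case: (cvl d hd) => N1 H1; case: (cvm d hd) => N2 H2.
  exists (maxn N1 N2) => k hk.
  have k1 : ge k N1 by apply/leP; exact: leq_trans (leq_maxl _ _) hk.
  have k2 : ge k N2 by apply/leP; exact: leq_trans (leq_maxr _ _) hk.
  move: (H1 k k1) (H2 k k2); rewrite /R_dist !Rminus_0_r => /Rabs_def2 [? _] /Rabs_def2 [? _].
  by split.
have Hdiff : forall e, 0 < e -> exists N, forall k, (N <= k)%nat ->
    norm2 (vsub (u (lamk k) (muk k)) (v (lamk k) (muk k))) < e.
  move=> e he; case: (Hconv2 e he) => d [hd H]; case: (Hsmall d hd) => N HN.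
  exists N => k hk; case: (HN k hk) => ? ?; case: (hpos k) => ? ?.
  apply: H; lra.
have Hclu : forall p, cluster_point (fun k => v (lamk k) (muk k)) p <->
                cluster_point (fun k => u (lamk k) (muk k)) p.
  move=> p; split => hc eps he N.
    case: (Hdiff (eps / 2) ltac:(lra)) => N1 H1.
    case: (hc (eps / 2) ltac:(lra) (maxn N N1)) => k [hk hkd] /=.
    exists k; split; first exact: leq_trans (leq_maxl _ _) hk.
    move: hkd => /= hkd.
    have := tri (u (lamk k) (muk k)) (v (lamk k) (muk k)) p.
    have := H1 k (leq_trans (leq_maxr _ _) hk); lra.
  case: (Hdiff (eps / 2) ltac:(lra)) => N1 H1.
  case: (hc (eps / 2) ltac:(lra) (maxn N N1)) => k [hk hkd] /=.
  exists k; split; first exact: leq_trans (leq_maxl _ _) hk.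
  move: hkd => /= hkd.
  have := tri (v (lamk k) (muk k)) (u (lamk k) (muk k)) p.
  rewrite (@norm2_ext _ (vsub (v (lamk k) (muk k)) (u (lamk k) (muk k)))
                        (vsub (u (lamk k) (muk k)) (v (lamk k) (muk k)))); last first.
    by move=> i; rewrite /vsub; ring.
  have := H1 k (leq_trans (leq_maxr _ _) hk); lra.
split; first exact: Hclu.
move=> p hp; have hpu := (Hclu p).1 hp.
split.
  apply: Rnot_lt_le => hlt.
  have [a [ha hda]] : exists a, F2 a <= 1 /\ 1 < dot a (vsub x p).
    apply: NNPP => hne; case: (hNd2 (vsub x p)) => _ lub.
    have : Nd2 (vsub x p) <= 1.
      apply: lub => t [a [ha ->]]; apply: Rnot_lt_le => h; apply: hne; by exists a.
    lra.
  set g := dot a (vsub x p) - 1.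
  have hg : 0 < g by rewrite /g; lra.
  have hna := norm2_ge0 a.
  have hq : 0 < g / (norm2 a + 1) by apply: Rdiv_lt_0_compat; lra.
  case: (hpu _ hq 0%nat) => k [_ hk]; move: hk => /= hk.
  case: (hpos k) => hl hm.
  have hw := Hfeas _ _ hl hm.
  have hub : dot a (w (lamk k) (muk k)) <= Nd2 (w (lamk k) (muk k)) by apply: nd_ub hNd2 ha.
  have E : dot a (w (lamk k) (muk k)) = dot a (vsub x p) - dot a (vsub (u (lamk k) (muk k)) p).
    rewrite -dot_sub; apply: dot_ext => i; rewrite /u /vsub; ring.
  have hcs := CS a (vsub (u (lamk k) (muk k)) p).
  have hab := Rle_abs (dot a (vsub (u (lamk k) (muk k)) p)).
  have hid : g / (norm2 a + 1) * (norm2 a + 1) = g by field; lra.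
  have := norm2_ge0 (vsub (u (lamk k) (muk k)) p).
  move=> h0.
  have : norm2 a * norm2 (vsub (u (lamk k) (muk k)) p) < g.
    have : norm2 a * norm2 (vsub (u (lamk k) (muk k)) p) <= norm2 a * (g / (norm2 a + 1)).
      apply: Rmult_le_compat_l; lra.
    nra.
  rewrite /g in hg *; lra.
move=> u' hu'; apply: Rle_plus_epsilon => e he.
case: (norm_bound hF1) => C [hC hCb].
set X := norm2 u' ^ 2.
have hX : 0 <= X by apply: pow2_ge_0.
have hd1 : 0 < e / (X + 1) by apply: Rdiv_lt_0_compat; lra.
case: (Hsmall _ hd1) => N1 H1.
have hd2 : 0 < e / (2 * (C + 1)) by apply: Rdiv_lt_0_compat; lra.
case: (hp _ hd2 N1) => k [hk hkd]; move: hkd => /= hkd.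
case: (H1 k hk) => hl _; case: (hpos k) => hl0 hm0.
have hv := Hu' _ _ u' hl0 hm0 hu'.
set vk := v (lamk k) (muk k) in hkd hv.
have Ep : p = vadd vk (vsub p vk).
  apply: functional_extensionality => i; rewrite /vadd /vsub; ring.
have h1 : F1 p <= F1 vk + F1 (vsub p vk) by rewrite {1}Ep; exact: hF1t.
have h2 : F1 (vsub p vk) <= C * norm2 (vsub vk p).
  rewrite (@norm2_ext _ (vsub vk p) (vsub p vk)); first exact: hCb.
  by move=> i; rewrite /vsub; ring.
have h3 : C * norm2 (vsub vk p) <= C * (e / (2 * (C + 1))).
  apply: Rmult_le_compat_l; lra.
have h4 : C * (e / (2 * (C + 1))) <= e / 2.
  have -> : C * (e / (2 * (C + 1))) = e / 2 * (C / (C + 1)) by field; lra.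
  have : C / (C + 1) <= 1.
    have -> : C / (C + 1) = 1 - 1 / (C + 1) by field; lra.
    have : 0 < 1 / (C + 1) by apply: Rdiv_lt_0_compat; lra.
    lra.
  move=> hc1; have : e / 2 * (C / (C + 1)) <= e / 2 * 1 by apply: Rmult_le_compat_l; lra.
  lra.
have h5 : lamk k / 2 * X <= e / 2.
  have : lamk k * (X + 1) < e / (X + 1) * (X + 1) by apply: Rmult_lt_compat_r; lra.
  have -> : e / (X + 1) * (X + 1) = e by field; lra.
  nra.
rewrite /X in h5; lra.
Qed.
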